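(* Let $T_0\in\mathcal{G}(X)$ and $T \in \mathcal{G}_{T_0}$. Let $D \subset L^2(Z|X)$ be a set with $\big\|\|f\|_{L^2(Z|X)}\big\|_{L^\infty(X)} \le 1$ for all $f\in D$, such that $D$ is dense, with respect to the $L^2(Z)$ norm, in the unit ball $\{f\in L^2(Z|X) : \|\|f\|_{L^2(Z|X)}\|_{L^\infty(X)}\le 1\}$. Suppose there is a subsequence $n_k$ such that for all $f_i, f_j \in D$, $$\lim_{k\to\infty}\big\|\mathbb{E}(T^{n_k}f_i\cdot\overline{f_j}|X) - \mathbb{E}(T_0^{n_k}f_i\cdot\overline{f_j}|X)\big\|_{L^2(X)} = 0.$$ Then $T \in \mathcal{R}_{T_0}$.
   Context: Let $(X,m)$ and $(Y,\nu)$ both be the unit interval with Lebesgue measure, and $(Z,\mu) = (X\times Y, m\times\nu)$. $\mathcal{G}(W)$ denotes the set of invertible measure-preserving transformations of a space $W$. $\mathcal{G}_{T_0} \subset \mathcal{G}(Z)$ is the set of transformations of the form $T(x,y) = (T_0x, T_x y)$ with $T_x \in \mathcal{G}(Y)$ (extensions of $T_0$); $T_0$ is identified with $T_0\times\mathrm{id}_Y$ on $Z$. For $f$ on $Z$, $T^nf = f\circ T^n$. $\mathbb{E}(\cdot|X)$ is conditional expectation onto the $\sigma$-algebra of sets $B\times Y$. $L^2(Z|X)$ is the space of $f\in L^2(Z)$ with $\|f\|_{L^2(Z|X)} := \mathbb{E}(|f|^2|X)^{1/2} \in L^\infty(X)$. $T\in\mathcal{G}_{T_0}$ is a rigid extension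 of $T_0$ if there is a subsequence $n_k$ such that for all $f,g\in L^2(Z|X)$, $\lim_{k\to\infty}\|\mathbb{E}(T^{n_k}f\cdot\overline{g}|X) - \mathbb{E}(T_0^{n_k}f\cdot\overline{g}|X)\|_{L^2(X)} = 0$; $\mathcal{R}_{T_0}$ is the set of rigid extensions. *)

(* Defs.v *)
From mathcomp Require Import all_boot all_order all_algebra.
From mathcomp Require Import all_classical all_reals all_analysis.
From mathcomp Require Import complex.
Import Order.TTheory GRing.Theory Num.Theory.
Set Implicit Arguments. Unset Strict Implicit. Unset Printing Implicit Defensive.
Local Open Scope ring_scope.
Local Open Scope classical_set_scope.

Section Defs.
Variable R : realType.

(* The unit interval X = Y = [0,1] with Lebesgue measure, modelled (mod 0)
   as the real line with Lebesgue measure restricted to [0,1]. *)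
Definition pt := measurableTypeR R.

Lemma measurable_unit_itv : measurable (`[0%R, 1%R]%classic : set pt).
Proof. exact: measurable_itv. Qed.

Definition mX : set pt -> \bar R := mrestr (@lebesgue_measure R) measurable_unit_itv.

Definition mZ := (mX \x mX)%E.

Definition inG d (W : measurableType d) (mu : set W -> \bar R) (S : W -> W) :=
  exists Sinv : W -> W,
    [/\ cancel S Sinv, cancel Sinv S,
        measurable_fun setT S, measurable_fun setT Sinv &
        forall A, measurable A -> mu (S @^-1` A) = mu A].

Definition GX (S : pt -> pt) := inG mX S.
Definition GZ (S : pt * pt -> pt * pt) := inG mZ S.

Definition liftX (T0 : pt -> pt) : pt * pt -> pt * pt :=
  fun z => (T0 z.1, z.2).

Definition GT0 (T0 : pt -> pt) (T : pt * pt -> pt * pt) :=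
  GZ T /\ exists Tx : pt -> pt -> pt,
    (forall x, GX (Tx x)) /\ forall x y, T (x, y) = (T0 x, Tx x y).

Definition cfun := pt * pt -> R[i].

Definition sqnorm (z : R[i]) : R := complex.Re z ^+ 2 + complex.Im z ^+ 2.

Definition cmeasurable (f : cfun) :=
  measurable_fun setT (fun z => complex.Re (f z)) /\
  measurable_fun setT (fun z => complex.Im (f z)).

Definition Tpow (T : pt * pt -> pt * pt) (n : nat) (f : cfun) : cfun :=
  fun z => f (iter n T z).

Definition cmul (f g : cfun) : cfun := fun z => f z * g z.
Definition cconj (f : cfun) : cfun := fun z => (f z)^*.

(* E(h | X)(x) = \int_Y h(x,y) dnu(y)  (conditional expectation onto the
   sigma-algebra of sets B x Y, for the product measure) *)
Definition condE (h : cfun) (x : pt) : R[i] :=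
  Complex (Rintegral mX setT (fun y => complex.Re (h (x, y))))
          (Rintegral mX setT (fun y => complex.Im (h (x, y)))).

Definition condnorm2 (f : cfun) (x : pt) : \bar R :=
  (\int[mX]_y (sqnorm (f (x, y)))%:E)%E.

Definition L2ZX (f : cfun) :=
  cmeasurable f /\ exists M : R, {ae mX, forall x, (condnorm2 f x <= M%:E)%E}.

Definition ballZX (f : cfun) :=
  L2ZX f /\ {ae mX, forall x, (condnorm2 f x <= 1%:E)%E}.

Definition distZ2 (f g : cfun) : \bar R :=
  (\int[mZ]_z (sqnorm (f z - g z))%:E)%E.

Definition distX2 (u v : pt -> R[i]) : \bar R :=
  (\int[mX]_x (sqnorm (u x - v x))%:E)%E.

Definition rigid_gap (T0 : pt -> pt) (T : pt * pt -> pt * pt) (n : nat) (f g : cfun) :=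
  distX2 (condE (cmul (Tpow T n f) (cconj g)))
         (condE (cmul (Tpow (liftX T0) n f) (cconj g))).

Definition subsequence (n : nat -> nat) := forall a b, (a < b)%N -> (n a < n b)%N.

Definition rigid_ext (T0 : pt -> pt) (T : pt * pt -> pt * pt) :=
  GT0 T0 T /\ exists n : nat -> nat, subsequence n /\
    forall f g, L2ZX f -> L2ZX g ->
      (fun k => rigid_gap T0 T (n k) f g) @ \oo --> 0%E.

End Defs.

(* Main.v *)
From HB Require Import structures.
Require Import Defs.
From mathcomp Require Import all_boot all_order all_algebra.
From mathcomp Require Import all_classical all_reals all_analysis.
From mathcomp Require Import measurable_realfun.
From mathcomp Require Import complex.
From mathcomp Require Import ring lra.
Import Order.TTheory GRing.Theory Num.Theory.
Set Implicit Arguments. Unset Strict Implicit. Unset Printing Implicit Defensive.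
Local Open Scope ring_scope.
Local Open Scope classical_set_scope.
Section P1.
Variable R : realType.
Local Notation P := (pt R).

Lemma mX_fin : fin_num_fun (@mX R).
Proof.
move=> A mA. rewrite ge0_fin_numE ?measure_ge0//.
rewrite /mX /mrestr. apply: (@le_lt_trans _ _ (lebesgue_measure (`[0%R, 1%R]%classic : set (pt R)))).
  have mI := @measurable_unit_itv R.
  apply: le_measure; rewrite ?inE /=; [exact: measurableI|exact: mI|exact: subIsetr].
rewrite lebesgue_measure_itv/=. case: ifP => _; exact: ltry.
Qed.
End P1.

HB.instance Definition _ R := Measure.on (@mX R).
HB.instance Definition _ R := @Measure_isFinite.Build _ _ _ (@mX R) (@mX_fin R).

Section P1b.
Variable R : realType.
Local Notation P := (pt R).

Lemma ReB (x y : R[i]) : complex.Re (x - y) = complex.Re x - complex.Re y.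
Proof. by case: x; case: y. Qed.
Lemma ImB (x y : R[i]) : complex.Im (x - y) = complex.Im x - complex.Im y.
Proof. by case: x; case: y. Qed.
Lemma ReD (x y : R[i]) : complex.Re (x + y) = complex.Re x + complex.Re y.
Proof. by case: x; case: y. Qed.
Lemma ImD (x y : R[i]) : complex.Im (x + y) = complex.Im x + complex.Im y.
Proof. by case: x; case: y. Qed.
Lemma ReM (x y : R[i]) : complex.Re (x * y) = complex.Re x * complex.Re y - complex.Im x * complex.Im y.
Proof. by case: x; case: y. Qed.
Lemma ImM (x y : R[i]) : complex.Im (x * y) = complex.Re x * complex.Im y + complex.Im x * complex.Re y.
Proof. by case: x => a b; case: y => c e /=; rewrite addrC. Qed.
Lemma ReC (x : R[i]) : complex.Re (x^*) = complex.Re x.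
Proof. by case: x. Qed.
Lemma ImC (x : R[i]) : complex.Im (x^*) = - complex.Im x.
Proof. by case: x. Qed.

Definition cm d (T : measurableType d) (h : T -> R[i]) :=
  measurable_fun setT (fun z => complex.Re (h z)) /\
  measurable_fun setT (fun z => complex.Im (h z)).

Lemma cmB d (T : measurableType d) (f g : T -> R[i]) : cm f -> cm g -> cm (fun z => f z - g z).
Proof.
move=> [f1 f2] [g1 g2]; split.
- under eq_fun do rewrite ReB. exact: measurable_realfun.measurable_funB.
- under eq_fun do rewrite ImB. exact: measurable_realfun.measurable_funB.
Qed.

Lemma cmM d (T : measurableType d) (f g : T -> R[i]) : cm f -> cm g -> cm (fun z => f z * g z).
Proof.
move=> [f1 f2] [g1 g2]; split.
- under eq_fun do rewrite ReM. by apply: measurable_realfun.measurable_funB; apply: measurable_realfun.measurable_funM.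
- under eq_fun do rewrite ImM. by apply: measurable_realfun.measurable_funD; apply: measurable_realfun.measurable_funM.
Qed.

Lemma cmC d (T : measurableType d) (f : T -> R[i]) : cm f -> cm (fun z => (f z)^*).
Proof.
move=> [f1 f2]; split; first by under eq_fun do rewrite ReC.
under eq_fun do rewrite ImC. exact: measurable_realfun.measurable_funN.
Qed.

Lemma cm_comp d d' (T : measurableType d) (T' : measurableType d') (f : T' -> R[i]) (phi : T -> T') :
  cm f -> measurable_fun setT phi -> cm (fun z => f (phi z)).
Proof.
move=> [f1 f2] mphi; split.
- exact: (measurableT_comp f1 mphi).
- exact: (measurableT_comp f2 mphi).
Qed.

Lemma cm_sec (f : P * P -> R[i]) x : cm f -> cm (fun y => f (x, y)).
Proof. by move=> cf; apply: cm_comp => //; exact: pair1_measurable. Qed.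

Lemma cm_sqnorm d (T : measurableType d) (f : T -> R[i]) : cm f -> measurable_fun setT (fun z => sqnorm (f z)).
Proof.
move=> [f1 f2]; rewrite /sqnorm; apply: measurable_realfun.measurable_funD.
- exact: measurable_realfun.measurable_funX.
- exact: measurable_realfun.measurable_funX.
Qed.

Lemma sqnorm_ge0 (z : R[i]) : 0 <= sqnorm z.
Proof. by rewrite /sqnorm addr_ge0 // sqr_ge0. Qed.

End P1b.
Section P2.
Variable R : realType.
Local Notation P := (pt R).
Local Open Scope ereal_scope.

Lemma GX_meas (U : P -> P) : GX U -> measurable_fun setT U.
Proof. by case=> V [_ _ mU _ _]. Qed.

Lemma GX_pres (U : P -> P) : GX U -> forall A, measurable A -> mX (U @^-1` A) = mX A.
Proof. by case=> V [_ _ _ _ h]. Qed.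

Lemma iter_meas d (T : measurableType d) (U : T -> T) n :
  measurable_fun setT U -> measurable_fun setT (iter n U).
Proof.
move=> mU; elim: n => [|n IH] /=; first exact: measurable_id.
exact: (measurableT_comp mU IH).
Qed.

Lemma int_inv (U : P -> P) (psi : P -> \bar R) : GX U ->
  measurable_fun setT psi -> (forall x, 0 <= psi x) ->
  \int[@mX R]_x psi (U x) = \int[@mX R]_x psi x.
Proof.
move=> gU mpsi psi0.
have mU := GX_meas gU.
have := @ge0_integral_pushforward _ _ _ _ R U mU (@mX R) setT psi measurableT mpsi (fun y _ => psi0 y).
rewrite preimage_setT => <-.
apply: eq_measure_integral => A mA _.
exact: (GX_pres gU mA).
Qed.

Lemma int_inv_iter (U : P -> P) (psi : P -> \bar R) n : GX U ->
  measurable_fun setT psi -> (forall x, 0 <= psi x) ->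
  \int[@mX R]_x psi (iter n U x) = \int[@mX R]_x psi x.
Proof.
move=> gU mpsi psi0; elim: n => [//|n IH].
under eq_integral do rewrite iterSr.
rewrite (int_inv (psi := fun x => psi (iter n U x)) gU) //.
exact: (measurableT_comp mpsi (iter_meas n (GX_meas gU))).
Qed.

Lemma ae_inv (U : P -> P) (Q : P -> Prop) : GX U ->
  {ae @mX R, forall x, Q x} -> {ae @mX R, forall x, Q (U x)}.
Proof.
move=> gU [N [mN N0 sN]].
exists (U @^-1` N); split.
- by rewrite -[X in measurable X]setTI; apply: (GX_meas gU).
- by rewrite GX_pres.
- by move=> x /= nQ; apply: sN.
Qed.

Lemma ae_inv_iter (U : P -> P) (Q : P -> Prop) n : GX U ->
  {ae @mX R, forall x, Q x} -> {ae @mX R, forall x, Q (iter n U x)}.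
Proof.
move=> gU; elim: n Q => [//|n IH] Q aeQ.
have := ae_inv gU (IH Q aeQ).
by apply: filterS => x; rewrite iterSr.
Qed.

End P2.
Section P3.
Variable R : realType.
Local Notation P := (pt R).
Local Open Scope ereal_scope.

Lemma fub (h : P * P -> R[i]) : cm h ->
  \int[@mZ R]_z (sqnorm (h z))%:E = \int[@mX R]_x condnorm2 h x.
Proof.
move=> ch; rewrite /mZ (fubini_tonelli1 (fun z => (sqnorm (h z))%:E)) //.
- by apply/measurable_EFinP; exact: cm_sqnorm.
- by move=> z; rewrite lee_fin sqnorm_ge0.
Qed.

Lemma meas_cn (h : P * P -> R[i]) : cm h -> measurable_fun setT (condnorm2 h).
Proof.
move=> ch; apply: (measurable_fun_fubini_tonelli_F (fun z => (sqnorm (h z))%:E)).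
- by apply/measurable_EFinP; exact: cm_sqnorm.
- by move=> z; rewrite lee_fin sqnorm_ge0.
Qed.

Lemma cn_ge0 (h : P * P -> R[i]) x : 0 <= condnorm2 h x.
Proof. by apply: integral_ge0 => y _; rewrite lee_fin sqnorm_ge0. Qed.

Lemma meas_RI (k : P * P -> R) : measurable_fun setT k ->
  measurable_fun setT (fun x => Rintegral (@mX R) setT (fun y => k (x, y))).
Proof.
move=> mk; rewrite /Rintegral.
apply: (measurableT_comp (fine_measurable measurableT)).
under eq_fun do rewrite integralE.
have h1 := measurable_fun_fubini_tonelli_F (m2 := @mX R) (fun z => (k z)%:E)^\+
  (measurable_funepos (proj2 (measurable_EFinP _ _) mk)) (funepos_ge0 (fun z => (k z)%:E)).
have h2 := measurable_fun_fubini_tonelli_F (m2 := @mX R) (fun z => (k z)%:E)^\-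
  (measurable_funeneg (proj2 (measurable_EFinP _ _) mk)) (funeneg_ge0 (fun z => (k z)%:E)).
have e1 x : \int[@mX R]_y ((fun y => (k (x, y))%:E)^\+ y) =
   fubini_F (@mX R) (fun z => (k z)%:E)^\+ x.
  by apply: eq_integral => y _; rewrite !funeposE.
have e2 x : \int[@mX R]_y ((fun y => (k (x, y))%:E)^\- y) =
   fubini_F (@mX R) (fun z => (k z)%:E)^\- x.
  by apply: eq_integral => y _; rewrite !funenegE.
under eq_fun do rewrite e1 e2.
exact: (emeasurable_funB h1 h2).
Qed.

Definition ext (T0 : P -> P) (S : P * P -> P * P) :=
  measurable_fun setT S /\ exists Sx : P -> P -> P,
    (forall x, GX (Sx x)) /\ forall x y, S (x, y) = (T0 x, Sx x y).

Lemma sec_inv (T0 : P -> P) (S : P * P -> P * P) n (Phi : P * P -> \bar R) :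
  ext T0 S -> measurable_fun setT Phi -> (forall z, 0 <= Phi z) ->
  forall x, \int[@mX R]_y Phi (iter n S (x, y)) = \int[@mX R]_y Phi (iter n T0 x, y).
Proof.
move=> [mS [Sx [gS eS]]] mPhi Phi0.
elim: n => [//|n IH] x.
under eq_integral do rewrite iterSr eS.
rewrite (int_inv (psi := fun y => Phi (iter n S (T0 x, y))) (gS x)).
- by rewrite IH iterSr.
- apply: (measurableT_comp mPhi).
  apply: (measurableT_comp (iter_meas n mS)).
  exact: pair1_measurable.
- by move=> y; exact: Phi0.
Qed.

End P3.
Section P4.
Variable R : realType.
Local Notation P := (pt R).
Local Notation mu := (@mX R).

Definition N2 (p : P -> R[i]) : \bar R := (\int[mu]_y (sqnorm (p y))%:E)%E.
Definition L2y (p : P -> R[i]) := cm p /\ (N2 p < +oo)%E.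
Definition CI (h : P -> R[i]) : R[i] :=
  Complex (Rintegral mu setT (fun y => complex.Re (h y)))
          (Rintegral mu setT (fun y => complex.Im (h y))).
Definition Int (h : P -> R[i]) :=
  mu.-integrable setT (EFin \o (fun y => complex.Re (h y))) /\
  mu.-integrable setT (EFin \o (fun y => complex.Im (h y))).

Lemma condE_CI (h : P * P -> R[i]) x : condE h x = CI (fun y => h (x, y)).
Proof. by []. Qed.

Lemma N2_ge0 p : (0 <= N2 p)%E.
Proof. by apply: integral_ge0 => y _; rewrite lee_fin sqnorm_ge0. Qed.

Lemma N2_fin p : L2y p -> N2 p = (fine (N2 p))%:E.
Proof. by move=> [_ h]; rewrite fineK // ge0_fin_numE // N2_ge0. Qed.

Lemma int_dom (r : P -> R) (g : P -> R) : measurable_fun setT r ->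
  measurable_fun setT g -> (forall y, `|r y| <= g y) ->
  (\int[mu]_y (g y)%:E < +oo)%E -> mu.-integrable setT (EFin \o r).
Proof.
move=> mr mg rg gfin; apply/integrableP; split; first exact/measurable_EFinP.
apply: (le_lt_trans _ gfin).
apply: ge0_le_integral => //.
- by apply: measurableT_comp => //; exact/measurable_EFinP.
- by apply/measurable_EFinP.
- by move=> y _; have := rg y; rewrite -lee_fin -abse_EFin.
Qed.

Lemma int_sum2 p q : L2y p -> L2y q ->
  (\int[mu]_y (sqnorm (p y) + sqnorm (q y))%:E < +oo)%E.
Proof.
move=> [cp hp] [cq hq].
under eq_integral do rewrite EFinD.
rewrite ge0_integralD //.
- exact: lte_add_pinfty.
- by move=> y _; rewrite lee_fin sqnorm_ge0.
- by apply/measurable_EFinP; exact: cm_sqnorm.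
- by move=> y _; rewrite lee_fin sqnorm_ge0.
- by apply/measurable_EFinP; exact: cm_sqnorm.
Qed.

Lemma int_sq p : L2y p -> mu.-integrable setT (EFin \o (fun y => sqnorm (p y))).
Proof.
move=> [cp hp]; apply: (int_dom (g := fun y => sqnorm (p y))) => //.
- exact: cm_sqnorm.
- exact: cm_sqnorm.
- by move=> y; rewrite ger0_norm // sqnorm_ge0.
Qed.

Lemma Int_mul p q : L2y p -> L2y q -> Int (fun y => p y * (q y)^*).
Proof.
move=> Lp Lq; have [[p1 p2] _] := Lp; have [[q1 q2] _] := Lq.
have cpq := cmM (proj1 Lp) (cmC (proj1 Lq)).
split; apply: (int_dom (g := fun y => sqnorm (p y) + sqnorm (q y))).
- exact: (proj1 cpq).
- by apply: measurable_funD; exact: cm_sqnorm.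
- move=> y; rewrite ReM ReC ImC /sqnorm.
  set a := complex.Re (p y); set b := complex.Im (p y).
  set c := complex.Re (q y); set e := complex.Im (q y).
  have h1 := sqr_ge0 (a - c); have h2 := sqr_ge0 (a + c).
  have h3 := sqr_ge0 (b - e); have h4 := sqr_ge0 (b + e).
  have h5 := sqr_ge0 (a - e); have h6 := sqr_ge0 (a + e).
  have h7 := sqr_ge0 (b - c); have h8 := sqr_ge0 (b + c).
  rewrite ler_norml; apply/andP; split; nra.
- exact: int_sum2.
- exact: (proj2 cpq).
- by apply: measurable_funD; exact: cm_sqnorm.
- move=> y; rewrite ImM ReC ImC /sqnorm.
  set a := complex.Re (p y); set b := complex.Im (p y).
  set c := complex.Re (q y); set e := complex.Im (q y).
  have h1 := sqr_ge0 (a - c); have h2 := sqr_ge0 (a + c).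
  have h3 := sqr_ge0 (b - e); have h4 := sqr_ge0 (b + e).
  have h5 := sqr_ge0 (a - e); have h6 := sqr_ge0 (a + e).
  have h7 := sqr_ge0 (b - c); have h8 := sqr_ge0 (b + c).
  rewrite ler_norml; apply/andP; split; nra.
- exact: int_sum2.
Qed.

Lemma L2y_sub p q : L2y p -> L2y q -> L2y (fun y => p y - q y).
Proof.
move=> Lp Lq; have cpq := cmB (proj1 Lp) (proj1 Lq).
have [cp _] := Lp; have [cq _] := Lq.
split => //; rewrite /N2.
apply: le_lt_trans (_ : (\int[mu]_y ((2 * (sqnorm (p y) + sqnorm (q y)))%:E) < +oo)%E).
  apply: ge0_le_integral => //.
  - by move=> y _; rewrite lee_fin sqnorm_ge0.
  - by apply/measurable_EFinP; exact: cm_sqnorm.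
  - apply/measurable_EFinP; apply: measurable_funM => //.
    by apply: measurable_funD; exact: cm_sqnorm.
  - move=> y _; rewrite lee_fin /sqnorm ReB ImB.
    set a := complex.Re (p y); set b := complex.Im (p y).
    set c := complex.Re (q y); set e := complex.Im (q y).
    have h1 := sqr_ge0 (a + c); have h2 := sqr_ge0 (b + e).
    nra.
under eq_integral do rewrite EFinM.
rewrite ge0_integralZl //.
- rewrite lte_mul_pinfty //; exact: int_sum2.
- by apply/measurable_EFinP; apply: measurable_funD; exact: cm_sqnorm.
- by move=> y _; rewrite lee_fin addr_ge0 // sqnorm_ge0.
Qed.

Lemma CI_D h1 h2 : Int h1 -> Int h2 -> CI (fun y => h1 y + h2 y) = CI h1 + CI h2.
Proof.
move=> [a1 b1] [a2 b2]; rewrite /CI /=; congr Complex.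
- by under eq_Rintegral do rewrite ReD; rewrite RintegralD.
- by under eq_Rintegral do rewrite ImD; rewrite RintegralD.
Qed.

Lemma cs_arith (c A B : R) : 0 <= c -> 0 <= A -> 0 <= B ->
  (forall l, 0 < l -> 2 * c <= l * c * A + B / l) -> c <= A * B.
Proof.
move=> c0 A0 B0 H.
have [Ap|] := ltP 0 A.
  have := H A^-1; rewrite invr_gt0 => /(_ Ap).
  rewrite invrK -mulrA (mulrC c) mulrA mulVf ?gt_eqF // mul1r.
  by move=> h; rewrite mulrC; lra.
move=> A0'; have Ae : A = 0 by apply/eqP; rewrite eq_le A0' A0.
rewrite Ae mul0r leNgt; apply/negP => cp.
have l0 : 0 < (B + 1) / c by rewrite divr_gt0 //; lra.
have := H _ l0; rewrite Ae mulr0 add0r invf_div.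
have hB : B * (c / (B + 1)) <= c.
  rewrite mulrA ler_pdivrMr; last by lra.
  by rewrite mulrC ler_pM2l //; lra.
lra.
Qed.

End P4.
Section P5.
Variable R : realType.
Local Notation P := (pt R).
Local Notation mu := (@mX R).

Lemma iZ (k : R) (f : P -> R) : mu.-integrable setT (EFin \o f) ->
  mu.-integrable setT (EFin \o (fun y => k * f y)).
Proof. by move=> h; apply: (eq_integrable measurableT _ _ _ (integrableZl measurableT k h)) => y _. Qed.

Lemma iD (f g : P -> R) : mu.-integrable setT (EFin \o f) ->
  mu.-integrable setT (EFin \o g) ->
  mu.-integrable setT (EFin \o (fun y => f y + g y)).
Proof. by move=> hf hg; apply: (eq_integrable measurableT _ _ _ (integrableD measurableT hf hg)) => y _. Qed.

Lemma CS (p q : P -> R[i]) : L2y p -> L2y q ->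
  sqnorm (CI (fun y => p y * (q y)^*)) <= fine (N2 p) * fine (N2 q).
Proof.
move=> Lp Lq; have [ia ib] := Int_mul Lp Lq.
have ip := int_sq Lp; have iq := int_sq Lq.
set a := fun y => complex.Re (p y * (q y)^*) in ia *.
set b := fun y => complex.Im (p y * (q y)^*) in ib *.
set al := Rintegral mu setT a; set be := Rintegral mu setT b.
have -> : sqnorm (CI (fun y => p y * (q y)^*)) = al ^+ 2 + be ^+ 2 by [].
set c := al ^+ 2 + be ^+ 2.
apply: cs_arith.
- by rewrite /c addr_ge0 // sqr_ge0.
- by rewrite fine_ge0 // N2_ge0.
- by rewrite fine_ge0 // N2_ge0.
move=> l l0.
have ec : 2 * c = Rintegral mu setT (fun y => 2 * (al * a y + be * b y)).
  rewrite RintegralZl //; last by apply: iD; apply: iZ.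
  rewrite RintegralD //; try by apply: iZ.
  by rewrite !RintegralZl // /c !expr2.
have er : l * c * fine (N2 p) + fine (N2 q) / l =
    Rintegral mu setT (fun y => l * c * sqnorm (p y) + l^-1 * sqnorm (q y)).
  rewrite RintegralD //; try by apply: iZ.
  by rewrite !RintegralZl // (mulrC _ l^-1).
rewrite ec er; apply: le_Rintegral => //.
- by apply: iZ; apply: iD; apply: iZ.
- by apply: iD; apply: iZ.
move=> y _; rewrite /a /b ReM ImM ReC ImC /sqnorm.
set p1 := complex.Re (p y); set p2 := complex.Im (p y).
set q1 := complex.Re (q y); set q2 := complex.Im (q y).
have e : 2 * (al * (p1 * q1 - p2 * - q2) + be * (p1 * - q2 + p2 * q1)) =
  l * c * (p1 ^+ 2 + p2 ^+ 2) + l^-1 * (q1 ^+ 2 + q2 ^+ 2) -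
  l^-1 * ((l * (al * p1 + be * p2) - q1) ^+ 2 + (l * (al * p2 - be * p1) - q2) ^+ 2).
  rewrite /c; field; exact: lt0r_neq0.
rewrite e lerBlDr lerDl; apply: mulr_ge0; first by rewrite invr_ge0 ltW.
by rewrite addr_ge0 // sqr_ge0.
Qed.

End P5.
Section P6.
Variable R : realType.
Local Notation P := (pt R).
Local Notation mu := (@mX R).

Definition Aop (S : P * P -> P * P) n (f g : cfun R) (x : P) :=
  condE (cmul (Tpow S n f) (cconj g)) x.

Definition fsub (f g : cfun R) : cfun R := fun z => f z - g z.

Lemma sec_N2 (T0 : P -> P) S (w : cfun R) n x : ext T0 S -> cm w ->
  N2 (fun y => w (iter n S (x, y))) = condnorm2 w (iter n T0 x).
Proof.
move=> eS cw; rewrite /N2 /condnorm2.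
apply: (@sec_inv R T0 S n (fun z => (sqnorm (w z))%:E)) => //.
- by apply/measurable_EFinP; exact: cm_sqnorm.
- by move=> z; rewrite lee_fin sqnorm_ge0.
Qed.

Lemma sec_L2y (T0 : P -> P) S (w : cfun R) n x : ext T0 S -> cm w ->
  (condnorm2 w (iter n T0 x) < +oo)%E -> L2y (fun y => w (iter n S (x, y))).
Proof.
move=> eS cw h; split; last by rewrite (sec_N2 n x eS cw).
apply: (cm_comp cw); apply: (measurableT_comp (iter_meas n (proj1 eS))).
exact: pair1_measurable.
Qed.

Lemma sec_L2y0 (w : cfun R) x : cm w ->
  (condnorm2 w x < +oo)%E -> L2y (fun y => w (x, y)).
Proof. by move=> cw h; split => //; exact: cm_sec. Qed.

Lemma conj_id (a b c e : R[i]) :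
  a * b^* = (a - c) * b^* + c * (b - e)^* + c * e^*.
Proof.
case: a => a1 a2; case: b => b1 b2; case: c => c1 c2; case: e => e1 e2 /=.
congr Complex; ring.
Qed.

Lemma Int_D (h1 h2 : P -> R[i]) : Int h1 -> Int h2 -> Int (fun y => h1 y + h2 y).
Proof.
move=> [a1 b1] [a2 b2]; split.
- apply: (eq_integrable measurableT _ _ _ (iD a1 a2)) => y _ /=; by rewrite ReD.
- apply: (eq_integrable measurableT _ _ _ (iD b1 b2)) => y _ /=; by rewrite ImD.
Qed.

Lemma decomp S n (u v d1 d2 : cfun R) x :
  L2y (fun y => u (iter n S (x, y))) -> L2y (fun y => d1 (iter n S (x, y))) ->
  L2y (fun y => v (x, y)) -> L2y (fun y => d2 (x, y)) ->
  Aop S n u v x = Aop S n (fsub u d1) v x + Aop S n d1 (fsub v d2) x + Aop S n d1 d2 x.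
Proof.
move=> Lu Ld1 Lv Ld2; rewrite /Aop !condE_CI /cmul /Tpow /cconj /fsub.
have I1 := Int_mul (L2y_sub Lu Ld1) Lv.
have I2 := Int_mul Ld1 (L2y_sub Lv Ld2).
have I3 := Int_mul Ld1 Ld2.
set a := fun y => u (iter n S (x, y)); set b := fun y => v (x, y).
set c := fun y => d1 (iter n S (x, y)); set e := fun y => d2 (x, y).
rewrite (_ : CI _ = CI (fun y => ((a y - c y) * (b y)^* + c y * (b y - e y)^*) + c y * (e y)^*)); last first.
  by congr CI; apply: funext => y; exact: conj_id.
by rewrite CI_D ?CI_D //; exact: Int_D.
Qed.

End P6.
Section P7.
Variable R : realType.
Local Notation P := (pt R).
Local Notation mu := (@mX R).

Lemma sum5 (x1 x2 x3 x4 x5 : R) :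
  (x1 + x2 + x3 + x4 + x5) ^+ 2 <= 5 * (x1 ^+ 2 + x2 ^+ 2 + x3 ^+ 2 + x4 ^+ 2 + x5 ^+ 2).
Proof.
rewrite -subr_ge0.
have -> : 5 * (x1 ^+ 2 + x2 ^+ 2 + x3 ^+ 2 + x4 ^+ 2 + x5 ^+ 2) - (x1 + x2 + x3 + x4 + x5) ^+ 2
  = (x1 - x2) ^+ 2 + (x1 - x3) ^+ 2 + (x1 - x4) ^+ 2 + (x1 - x5) ^+ 2 + (x2 - x3) ^+ 2
  + (x2 - x4) ^+ 2 + (x2 - x5) ^+ 2 + (x3 - x4) ^+ 2 + (x3 - x5) ^+ 2 + (x4 - x5) ^+ 2 by ring.
by rewrite !addr_ge0 // sqr_ge0.
Qed.

Lemma sqnorm5 (a1 a2 a3 b1 b2 b3 : R[i]) :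
  sqnorm ((a1 + a2 + a3) - (b1 + b2 + b3)) <=
  5 * (sqnorm a1 + sqnorm a2 + sqnorm (a3 - b3) + sqnorm b1 + sqnorm b2).
Proof.
rewrite /sqnorm !ReB !ReD !ImB !ImD.
have h1 := sum5 (complex.Re a1) (complex.Re a2) (complex.Re a3 - complex.Re b3)
  (- complex.Re b1) (- complex.Re b2).
have h2 := sum5 (complex.Im a1) (complex.Im a2) (complex.Im a3 - complex.Im b3)
  (- complex.Im b1) (- complex.Im b2).
rewrite !sqrrN in h1 h2.
set X := complex.Re a1 + _ + _ - _.
have -> : X = complex.Re a1 + complex.Re a2 + (complex.Re a3 - complex.Re b3) +
  - complex.Re b1 + - complex.Re b2 by rewrite /X; ring.
set Y := complex.Im a1 + _ + _ - _.
have -> : Y = complex.Im a1 + complex.Im a2 + (complex.Im a3 - complex.Im b3) +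
  - complex.Im b1 + - complex.Im b2 by rewrite /Y; ring.
lra.
Qed.

Lemma bound1 (T0 : P -> P) S n (u v d1 : cfun R) x :
  ext T0 S -> cm u -> cm v -> cm d1 ->
  (condnorm2 u (iter n T0 x) <= 1)%E -> (condnorm2 d1 (iter n T0 x) <= 1)%E ->
  (condnorm2 v x <= 1)%E ->
  (condnorm2 (fsub u d1) (iter n T0 x) < +oo)%E /\
  sqnorm (Aop S n (fsub u d1) v x) <= fine (condnorm2 (fsub u d1) (iter n T0 x)).
Proof.
move=> eS cu cv cd1 hu hd1 hv.
have Lu := sec_L2y eS cu (le_lt_trans hu (ltry 1)).
have Ld1 := sec_L2y eS cd1 (le_lt_trans hd1 (ltry 1)).
have Lv := sec_L2y0 cv (le_lt_trans hv (ltry 1)).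
have Lud := L2y_sub Lu Ld1.
have cud : cm (fsub u d1) by exact: cmB.
have eN := sec_N2 n x eS cud.
split; first by rewrite -eN; case: Lud.
have := CS Lud Lv.
rewrite /Aop condE_CI /cmul /Tpow /cconj.
move/le_trans; apply.
rewrite /fsub in eN *. rewrite eN.
rewrite -[X in _ <= X]mulr1 ler_wpM2l //; first by rewrite fine_ge0 // cn_ge0.
rewrite -lee_fin -N2_fin //.
Qed.

Lemma bound2 (T0 : P -> P) S n (v d1 d2 : cfun R) x :
  ext T0 S -> cm v -> cm d1 -> cm d2 ->
  (condnorm2 d1 (iter n T0 x) <= 1)%E ->
  (condnorm2 v x <= 1)%E -> (condnorm2 d2 x <= 1)%E ->
  (condnorm2 (fsub v d2) x < +oo)%E /\
  sqnorm (Aop S n d1 (fsub v d2) x) <= fine (condnorm2 (fsub v d2) x).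
Proof.
move=> eS cv cd1 cd2 hd1 hv hd2.
have Ld1 := sec_L2y eS cd1 (le_lt_trans hd1 (ltry 1)).
have Lv := sec_L2y0 cv (le_lt_trans hv (ltry 1)).
have Ld2 := sec_L2y0 cd2 (le_lt_trans hd2 (ltry 1)).
have Lvd := L2y_sub Lv Ld2.
split; first by case: Lvd.
have := CS Ld1 Lvd.
rewrite /Aop condE_CI /cmul /Tpow /cconj.
move/le_trans; apply.
rewrite (sec_N2 n x eS cd1).
rewrite -[X in _ <= X]mul1r ler_wpM2r //; first by rewrite fine_ge0 // N2_ge0.
have h1 : (condnorm2 d1 (iter n T0 x)) \is a fin_num.
  by rewrite ge0_fin_numE ?cn_ge0 // (le_lt_trans hd1 (ltry 1)).
by rewrite -lee_fin fineK.
Qed.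

Lemma pw_main (T0 : P -> P) S1 S2 n (u v d1 d2 : cfun R) x :
  ext T0 S1 -> ext T0 S2 -> cm u -> cm v -> cm d1 -> cm d2 ->
  (condnorm2 u (iter n T0 x) <= 1)%E -> (condnorm2 d1 (iter n T0 x) <= 1)%E ->
  (condnorm2 v x <= 1)%E -> (condnorm2 d2 x <= 1)%E ->
  sqnorm (Aop S1 n u v x - Aop S2 n u v x) <=
  5 * (2 * fine (condnorm2 (fsub u d1) (iter n T0 x)) + 2 * fine (condnorm2 (fsub v d2) x)
       + sqnorm (Aop S1 n d1 d2 x - Aop S2 n d1 d2 x)).
Proof.
move=> e1 e2 cu cv cd1 cd2 hu hd1 hv hd2.
have L1u := sec_L2y e1 cu (le_lt_trans hu (ltry 1)).
have L1d := sec_L2y e1 cd1 (le_lt_trans hd1 (ltry 1)).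
have L2u := sec_L2y e2 cu (le_lt_trans hu (ltry 1)).
have L2d := sec_L2y e2 cd1 (le_lt_trans hd1 (ltry 1)).
have Lv := sec_L2y0 cv (le_lt_trans hv (ltry 1)).
have Ld2 := sec_L2y0 cd2 (le_lt_trans hd2 (ltry 1)).
rewrite (decomp L1u L1d Lv Ld2) (decomp L2u L2d Lv Ld2).
apply: le_trans (sqnorm5 _ _ _ _ _ _) _.
have [_ b11] := bound1 e1 cu cv cd1 hu hd1 hv.
have [_ b12] := bound1 e2 cu cv cd1 hu hd1 hv.
have [_ b21] := bound2 e1 cv cd1 cd2 hd1 hv hd2.
have [_ b22] := bound2 e2 cv cd1 cd2 hd1 hv hd2.
lra.
Qed.

End P7.
Section P8.
Variable R : realType.
Local Notation P := (pt R).
Local Notation mu := (@mX R).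
Local Open Scope ereal_scope.

Lemma ae2 (P1 P2 : P -> Prop) : {ae mu, forall x, P1 x} -> {ae mu, forall x, P2 x} ->
  {ae mu, forall x, P1 x /\ P2 x}.
Proof. by move=> h1 h2; apply: (filterS2 _ (fun x a b => conj a b) h1 h2). Qed.

Lemma ext_T (T0 : P -> P) T : GT0 T0 T -> ext T0 T.
Proof.
move=> [[Ti [_ _ mT _ _]] [Tx [gx eT]]]; split => //.
by exists Tx.
Qed.

Lemma GX_id : GX (@id P).
Proof. by exists id; split => //; exact: measurable_id. Qed.

Lemma ext_L (T0 : P -> P) : GX T0 -> ext T0 (liftX T0).
Proof.
move=> gT; split.
- apply: measurable_fun_pair => /=.
  + exact: (measurableT_comp (GX_meas gT) measurable_fst).
  + exact: measurable_snd.
- exists (fun _ => id); split => // x; exact: GX_id.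
Qed.

Definition gapI S1 S2 n (f g : cfun R) (x : P) :=
  sqnorm (Aop S1 n f g x - Aop S2 n f g x)%R.

Lemma cm_Aop S n (f g : cfun R) : measurable_fun setT S -> cm f -> cm g ->
  cm (fun x => Aop S n f g x).
Proof.
move=> mS cf cg.
have c := cmM (cm_comp cf (iter_meas n mS)) (cmC cg).
rewrite /Aop /condE /cmul /Tpow /cconj; split => /=.
- exact: (meas_RI (k := fun z => complex.Re (f (iter n S z) * (g z)^*)%R) (proj1 c)).
- exact: (meas_RI (k := fun z => complex.Im (f (iter n S z) * (g z)^*)%R) (proj2 c)).
Qed.

Lemma meas_gapI S1 S2 n (f g : cfun R) : measurable_fun setT S1 ->
  measurable_fun setT S2 -> cm f -> cm g ->
  measurable_fun setT (fun x => (gapI S1 S2 n f g x)%:E).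
Proof.
move=> m1 m2 cf cg; apply/measurable_EFinP; apply: cm_sqnorm.
by apply: cmB; apply: cm_Aop.
Qed.

Lemma distZ2_cn (f g : cfun R) : cm f -> cm g ->
  distZ2 f g = \int[mu]_x condnorm2 (fsub f g) x.
Proof. by move=> cf cg; rewrite /distZ2 fub //; exact: cmB. Qed.

End P8.
Section P9.
Variable R : realType.
Local Notation P := (pt R).
Local Notation mu := (@mX R).
Local Open Scope ereal_scope.

Lemma fin_of (e : \bar R) : 0 <= e -> e < +oo -> e = (fine e)%:E.
Proof. by move=> e0 eo; rewrite fineK // ge0_fin_numE. Qed.

Lemma int_main (T0 : P -> P) T n (u v d1 d2 : cfun R) :
  GX T0 -> GT0 T0 T -> ballZX u -> ballZX v -> ballZX d1 -> ballZX d2 ->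
  rigid_gap T0 T n u v <=
  5%:E * (2%:E * distZ2 u d1 + 2%:E * distZ2 v d2 + rigid_gap T0 T n d1 d2).
Proof.
move=> gT0 gT [[cu0 _] bu] [[cv0 _] bv] [[cd10 _] bd1] [[cd20 _] bd2].
have cu : cm u := cu0; have cv : cm v := cv0.
have cd1 : cm d1 := cd10; have cd2 : cm d2 := cd20.
have eT := ext_T gT; have eL := ext_L gT0.
set A := fun x => condnorm2 (fsub u d1) (iter n T0 x).
set B := condnorm2 (fsub v d2).
set C := fun x => (gapI T (liftX T0) n d1 d2 x)%:E.
have mA : measurable_fun setT A.
  exact: (measurableT_comp (meas_cn (cmB cu cd1)) (iter_meas n (GX_meas gT0))).
have mB : measurable_fun setT B := meas_cn (cmB cv cd2).
have mC : measurable_fun setT C := meas_gapI n (proj1 eT) (proj1 eL) cd1 cd2.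
have A0 x : 0 <= A x by exact: cn_ge0.
have B0 x : 0 <= B x by exact: cn_ge0.
have C0 x : 0 <= C x by rewrite lee_fin sqnorm_ge0.
have -> : distZ2 u d1 = \int[mu]_x A x.
  rewrite distZ2_cn // /A int_inv_iter //; first exact: meas_cn (cmB cu cd1).
  by move=> x; exact: cn_ge0.
have -> : distZ2 v d2 = \int[mu]_x B x by rewrite distZ2_cn.
have -> : rigid_gap T0 T n d1 d2 = \int[mu]_x C x by [].
have m2A : measurable_fun setT (fun x => 2%:E * A x) by exact: measurable_funeM.
have m2B : measurable_fun setT (fun x => 2%:E * B x) by exact: measurable_funeM.
have mS2 : measurable_fun setT (fun x => 2%:E * A x + 2%:E * B x) by exact: emeasurable_funD.
have mS3 : measurable_fun setT (fun x => 2%:E * A x + 2%:E * B x + C x) by exact: emeasurable_funD.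
have eR : \int[mu]_x (5%:E * (2%:E * A x + 2%:E * B x + C x)) =
    5%:E * (2%:E * \int[mu]_x A x + 2%:E * \int[mu]_x B x + \int[mu]_x C x).
  rewrite ge0_integralZl //; last by move=> x _; rewrite !adde_ge0 // mule_ge0.
  rewrite ge0_integralD //; try by move=> x _; rewrite ?adde_ge0 ?mule_ge0.
  rewrite ge0_integralD //; try by move=> x _; rewrite ?mule_ge0.
  by rewrite !ge0_integralZl.
rewrite -eR; apply: ae_ge0_le_integral => //.
- by move=> x _; rewrite lee_fin sqnorm_ge0.
- exact: (meas_gapI n (proj1 eT) (proj1 eL) cu cv).
- by move=> x _; rewrite mule_ge0 // !adde_ge0 // mule_ge0.
- exact: measurable_funeM.
have bu' := ae_inv_iter n gT0 bu.
have bd1' := ae_inv_iter n gT0 bd1.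
have H := ae2 (ae2 bu' bd1') (ae2 bv bd2).
apply: filterS H => x [[hu hd1] [hv hd2]] _.
have [fA _] := bound1 eT cu cv cd1 hu hd1 hv.
have [fB _] := bound2 eT cv cd1 cd2 hd1 hv hd2.
rewrite /C /A /B (fin_of (cn_ge0 _ _) fA) (fin_of (cn_ge0 _ _) fB).
have h := pw_main eT eL cu cv cd1 cd2 hu hd1 hv hd2.
rewrite -lee_fin in h; exact: h.
Qed.

End P9.
Section P10.
Variable R : realType.
Local Notation P := (pt R).
Local Notation mu := (@mX R).

Definition csc (k : R) (z : R[i]) : R[i] := Complex (k * complex.Re z) (k * complex.Im z).
Definition rsc (k : R) (f : cfun R) : cfun R := fun z => csc k (f z).

Lemma cm_rsc k (f : cfun R) : cm f -> cm (rsc k f).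
Proof.
move=> [f1 f2]; split => /=.
- exact: (measurable_funM (measurable_cst k) f1).
- exact: (measurable_funM (measurable_cst k) f2).
Qed.

Lemma rscK k (f : cfun R) : k != 0 -> rsc k (rsc k^-1 f) = f.
Proof.
move=> k0; apply: funext => z; rewrite /rsc /csc /=.
by case: (f z) => a b /=; rewrite !mulrA divff // !mul1r.
Qed.

Lemma sqnorm_csc k z : sqnorm (csc k z) = k ^+ 2 * sqnorm z.
Proof. by rewrite /sqnorm /csc /=; ring. Qed.

Lemma csc_mulC k a b : csc k a * (csc k b)^* = csc (k * k) (a * b^*).
Proof. by case: a => a1 a2; case: b => b1 b2; rewrite /csc /=; congr Complex; ring. Qed.

Lemma csc_sub k a b : csc k a - csc k b = csc k (a - b).
Proof. by case: a => a1 a2; case: b => b1 b2; rewrite /csc /=; congr Complex; ring. Qed.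

Lemma CI_csc k (h : P -> R[i]) : Int h -> CI (fun y => csc k (h y)) = csc k (CI h).
Proof.
by move=> [i1 i2]; rewrite /CI /csc /=; congr Complex; rewrite RintegralZl.
Qed.

Lemma cn_rsc k (f : cfun R) x : cm f ->
  condnorm2 (rsc k f) x = ((k ^+ 2)%:E * condnorm2 f x)%E.
Proof.
move=> cf; rewrite /condnorm2 /rsc.
under eq_integral do rewrite sqnorm_csc EFinM.
rewrite ge0_integralZl //.
- by apply/measurable_EFinP; apply: cm_sqnorm; exact: cm_sec.
- by move=> y _; rewrite lee_fin sqnorm_ge0.
- by rewrite lee_fin sqr_ge0.
Qed.

End P10.
Section P11.
Variable R : realType.
Local Notation P := (pt R).
Local Notation mu := (@mX R).

Lemma cvg0_ebar (w : nat -> \bar R) : (forall k, (0 <= w k)%E) ->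
  (forall e : R, 0 < e -> \forall k \near \oo, (w k <= e%:E)%E) -> w @ \oo --> 0%E.
Proof.
move=> w0 H; apply/fine_cvgP; split.
- have := H 1 ltr01; apply: filterS => k h.
  by rewrite ge0_fin_numE // (le_lt_trans h (ltry _)).
- apply/cvgrPdist_le => e e0; have := H e e0; apply: filterS => k h.
  rewrite sub0r normrN /=.
  move: (w0 k) h; case: (w k) => [r| |] //=; rewrite !lee_fin => r0 re.
  by rewrite ger0_norm.
Qed.

Lemma cvg0_ebar_inv (w : nat -> \bar R) : w @ \oo --> 0%E ->
  forall e : R, 0 < e -> \forall k \near \oo, (w k <= e%:E)%E.
Proof.
move/fine_cvgP => [fin cv] e e0.
move/cvgrPdist_le : cv => /(_ e e0) h.
apply: (filterS2 _ _ fin h) => k fk hk.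
rewrite -(fineK fk) lee_fin; rewrite sub0r normrN in hk.
exact: le_trans (ler_norm _) hk.
Qed.

Lemma ball_scale (f g : cfun R) : L2ZX f -> L2ZX g ->
  exists c : R, 0 < c /\ ballZX (rsc c^-1 f) /\ ballZX (rsc c^-1 g).
Proof.
move=> [cf [Mf hf]] [cg [Mg hg]].
set c := Num.max 1 (Num.max Mf Mg).
have c1 : 1 <= c by rewrite le_max lexx.
have c0 : 0 < c by apply: lt_le_trans c1.
have cc : c <= c ^+ 2 by rewrite expr2 -{1}(mul1r c) ler_wpM2r // ltW.
have Mfc : Mf <= c ^+ 2 by apply: le_trans cc; rewrite !le_max lexx !orbT.
have Mgc : Mg <= c ^+ 2 by apply: le_trans cc; rewrite !le_max lexx !orbT.
have key (M : R) (h : cfun R) : cm h -> M <= c ^+ 2 ->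
    {ae @mX R, forall x, (condnorm2 h x <= M%:E)%E} -> ballZX (rsc c^-1 h).
  move=> ch Mc hh; have crh := cm_rsc c^-1 ch.
  have bd : {ae @mX R, forall x, (condnorm2 (rsc c^-1 h) x <= 1%:E)%E}.
    apply: filterS hh => x hx; rewrite cn_rsc //.
    apply: le_trans (lee_wpmul2l _ hx) _; first by rewrite lee_fin sqr_ge0.
    rewrite -EFinM lee_fin exprVn mulrC ler_pdivrMr ?mul1r //.
    exact: exprn_gt0.
  by split => //; split => //; exists 1.
exists c; split => //; split; [exact: (key Mf) | exact: (key Mg)].
Qed.

Lemma Aop_rsc (T0 : P -> P) S n c (u v : cfun R) x : ext T0 S -> cm u -> cm v ->
  (condnorm2 u (iter n T0 x) <= 1)%E -> (condnorm2 v x <= 1)%E ->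
  Aop S n (rsc c u) (rsc c v) x = csc (c * c) (Aop S n u v x).
Proof.
move=> eS cu cv hu hv.
have Lu := sec_L2y eS cu (le_lt_trans hu (ltry 1)).
have Lv := sec_L2y0 cv (le_lt_trans hv (ltry 1)).
rewrite /Aop !condE_CI /cmul /Tpow /cconj /rsc -CI_csc; last exact: Int_mul.
by congr CI; apply: funext => y; rewrite csc_mulC.
Qed.

Lemma gap_rsc (T0 : P -> P) T n c (u v : cfun R) : GX T0 -> GT0 T0 T ->
  ballZX u -> ballZX v ->
  (rigid_gap T0 T n (rsc c u) (rsc c v) <= (c ^+ 4)%:E * rigid_gap T0 T n u v)%E.
Proof.
move=> gT0 gT [[cu0 _] bu] [[cv0 _] bv].
have cu : cm u := cu0; have cv : cm v := cv0.
have eT := ext_T gT; have eL := ext_L gT0.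
have e1 : rigid_gap T0 T n u v = (\int[mu]_x (gapI T (liftX T0) n u v x)%:E)%E by [].
have e2 : rigid_gap T0 T n (rsc c u) (rsc c v) =
  (\int[mu]_x (gapI T (liftX T0) n (rsc c u) (rsc c v) x)%:E)%E by [].
have m1 := meas_gapI n (proj1 eT) (proj1 eL) cu cv.
have m2 := meas_gapI n (proj1 eT) (proj1 eL) (cm_rsc c cu) (cm_rsc c cv).
rewrite e1 e2 -ge0_integralZl //; last 2 first.
- by move=> x _; rewrite lee_fin sqnorm_ge0.
- by rewrite lee_fin exprn_even_ge0.
apply: ae_ge0_le_integral => //.
- by move=> x _; rewrite lee_fin sqnorm_ge0.
- by move=> x _; rewrite mule_ge0 // lee_fin ?sqnorm_ge0 // exprn_even_ge0.
- exact: measurable_funeM.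
have bu' := ae_inv_iter n gT0 bu.
apply: filterS (ae2 bu' bv) => x [hu hv] _.
rewrite /gapI (Aop_rsc c eT cu cv hu hv) (Aop_rsc c eL cu cv hu hv).
rewrite csc_sub sqnorm_csc -EFinM lee_fin.
by rewrite -expr2 -exprM.
Qed.

End P11.
Theorem lemma4p3 (R : realType) (T0 : pt R -> pt R)
  (T : pt R * pt R -> pt R * pt R) (D : set (cfun R)) :
  GX T0 -> GT0 T0 T ->
  (forall f, D f -> ballZX f) ->
  (forall f, ballZX f -> forall eps : R, 0 < eps ->
     exists2 d, D d & (distZ2 f d < eps%:E)%E) ->
  (exists n : nat -> nat, subsequence n /\
     forall fi fj, D fi -> D fj ->
       (fun k => rigid_gap T0 T (n k) fi fj) @ \oo --> 0%E) ->
  rigid_ext T0 T.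
Proof.
move=> gT0 gT hD hdense [n [sn hconv]]; split => //; exists n; split => // f g Lf Lg.
have [c [c0 [bu bv]]] := ball_scale Lf Lg.
have ef : f = rsc c (rsc c^-1 f) by rewrite rscK // gt_eqF.
have eg : g = rsc c (rsc c^-1 g) by rewrite rscK // gt_eqF.
set u := rsc c^-1 f in bu ef; set v := rsc c^-1 g in bv eg.
apply: cvg0_ebar.
  by move=> k; apply: integral_ge0 => x _; rewrite lee_fin sqnorm_ge0.
move=> e e0.
set K := c ^+ 4 * 5.
have K0 : 0 < K by rewrite /K mulr_gt0 // exprn_gt0.
set dl := e / (8 * K).
have dl0 : 0 < dl by rewrite /dl divr_gt0 // mulr_gt0.
have [d1 Dd1 hd1] := hdense u bu dl dl0.
have [d2 Dd2 hd2] := hdense v bv dl dl0.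
have e2K : 0 < e / (2 * K) by rewrite divr_gt0 // mulr_gt0.
have := cvg0_ebar_inv (hconv d1 d2 Dd1 Dd2) e2K.
apply: filterS => k hk.
rewrite ef eg; apply: le_trans (gap_rsc (n k) c gT0 gT bu bv) _.
have c40 : (0 <= (c ^+ 4)%:E)%E by rewrite lee_fin exprn_even_ge0.
apply: le_trans (lee_wpmul2l c40 (int_main (n k) gT0 gT bu bv (hD d1 Dd1) (hD d2 Dd2))) _.
apply: (@le_trans _ _ ((c ^+ 4 * (5 * (2 * dl + 2 * dl + e / (2 * K))))%:E)).
  rewrite !EFinM !EFinD !EFinM.
  apply: lee_wpmul2l => //; apply: lee_wpmul2l; first by rewrite lee_fin.
  apply: leeD; first apply: leeD.
  - by apply: lee_wpmul2l; [rewrite lee_fin | exact: ltW].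
  - by apply: lee_wpmul2l; [rewrite lee_fin | exact: ltW].
  - exact: hk.
rewrite lee_fin le_eqVlt; apply/orP; left; apply/eqP.
rewrite /dl /K; field.
by rewrite gt_eqF.
Qed.
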